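(* Let $N\ge1$, $\varphi,\gamma\in(0,1)$ with $\varphi+\gamma\ge1$, $\alpha=\min\{\varphi,\gamma\}$. Let $(X_t)_{t\ge0}$ be a Markov chain on $\{0,1\}^N$ whose one-step transition probabilities are $$p_{t-1\to t}(\boldsymbol{x},\boldsymbol{y})=\varphi^{\|\boldsymbol{y}\|}\bar\varphi^{N-\|\boldsymbol{y}\|}\Big\{1+\sum_{A\subseteq[N],A\neq\emptyset}\kappa_{t,A}\prod_{k\in A}\Big(1-\frac{\boldsymbol{y}[k]}{\varphi}\Big)\Big(1-\frac{\boldsymbol{x}[k]}{\gamma}\Big)\Big\},\quad \kappa_{t,A}=\Big(\frac{\alpha}{\bar\alpha}\Big)^{|A|}\mathbb{E}\Big[\prod_{k\in A}\Big(1-\frac{Z_t[k]}{\alpha}\Big)\Big],$$ where each $Z_t$ is a random element of $\{0,1\}^N$ with exchangeable coordinates. Then $(\|X_t\|)_t$ is a Markov chain with transition distribution $$p_{t-1\to t}(\|\boldsymbol{y}\|\mid\|\boldsymbol{x}\|)=\binom{N}{\|\boldsymbol{y}\|}\varphi^{\|\boldsymbol{y}\|}\bar\varphi^{N-\|\boldsymbol{y}\|}\Big\{1+\sum_{k=1}^N\binom{N}{k}\tilde\kappa_{t,k}Q_k(\|\boldsymbol{y}\|;N,\varphi)Q_k(\|\boldsymbol{x}\|;N,\gamma)\Big\},$$ where $\tilde\kappa_{t,k}=(\alpha/\bar\alpha)^k\mathbb{E}[Q_k(\|Z_t\|;N,\alpha)]$.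
   Context: $\bar a=1-a$; $[N]=\{1,\dots,N\}$; $\|\boldsymbol{x}\|$ is the number of ones of $\boldsymbol{x}$ (its Hamming distance from $\boldsymbol{0}$). The Krawtchouk polynomials $Q_n(\zeta;N,a)$ are defined by $\sum_{n=0}^N\binom{N}{n}Q_n(\zeta;N,a)s^n=(1-(\bar a/a)s)^\zeta(1+s)^{N-\zeta}$. *)

(* Defs.v *)
From HB Require Import structures.
From mathcomp Require Import all_boot all_order all_algebra all_fingroup.
Set Implicit Arguments. Unset Strict Implicit. Unset Printing Implicit Defensive.
Import Order.TTheory GRing.Theory Num.Theory.
Local Open Scope ring_scope.

Definition state (N : nat) := {ffun 'I_N -> bool}.

Definition hw (N : nat) (x : state N) : nat := #|[pred k | x k]|.

Definition bit (R : ringType) (b : bool) : R := (b : nat)%:R.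

(* Krawtchouk polynomial Q_n(zeta; N, a), defined through its generating
   function: binom(N,n) Q_n = [s^n] (1 - (abar/a) s)^zeta (1 + s)^(N-zeta). *)
Definition krawtchouk (R : fieldType) (n zeta N : nat) (a : R) : R :=
  (((1 - ((1 - a) / a)%:P * 'X) ^+ zeta * (1 + 'X) ^+ (N - zeta)) : {poly R})`_n
  / ('C(N, n))%:R.

Definition expect (R : ringType) N (q : state N -> R) (f : state N -> R) : R :=
  \sum_(z : state N) q z * f z.

Definition kappa (R : fieldType) N (alpha : R) (qt : state N -> R)
  (A : {set 'I_N}) : R :=
  (alpha / (1 - alpha)) ^+ #|A| *
  expect qt (fun z => \prod_(k in A) (1 - bit R (z k) / alpha)).

Definition ptrans (R : fieldType) N (phi gamma alpha : R) (qt : state N -> R)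
  (x y : state N) : R :=
  phi ^+ hw y * (1 - phi) ^+ (N - hw y) *
  (1 + \sum_(A : {set 'I_N} | A != set0)
         kappa alpha qt A *
         \prod_(k in A) ((1 - bit R (y k) / phi) * (1 - bit R (x k) / gamma))).

Definition kappat (R : fieldType) N (alpha : R) (qt : state N -> R) (k : nat) : R :=
  (alpha / (1 - alpha)) ^+ k * expect qt (fun z => krawtchouk k (hw z) N alpha).

Definition plump (R : fieldType) N (phi gamma alpha : R) (qt : state N -> R)
  (mx my : nat) : R :=
  ('C(N, my))%:R * phi ^+ my * (1 - phi) ^+ (N - my) *
  (1 + \sum_(1 <= k < N.+1)
         ('C(N, k))%:R * kappat alpha qt k *
         krawtchouk k my N phi * krawtchouk k mx N gamma).

(* Law of the path (X_0, ..., X_T) of a Markov chain with initial law mu and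
   transitions p t (for the step t-1 -> t): probability that ||X_i|| = ms i
   for all i <= T. *)
Definition path_hw_prob (R : ringType) N (mu : state N -> R)
  (p : nat -> state N -> state N -> R) (T : nat) (ms : nat -> nat) : R :=
  \sum_(xs : {ffun 'I_T.+1 -> state N} | [forall i, hw (xs i) == ms (val i)])
     mu (xs ord0) *
     \prod_(i < T) p i.+1 (xs (inord i)) (xs (inord i.+1)).

(* Main.v *)
Require Import Defs.
From HB Require Import structures.
From mathcomp Require Import all_boot all_order all_algebra all_fingroup.
Import Order.TTheory GRing.Theory Num.Theory.
Local Open Scope ring_scope.
From mathcomp Require Import ring.
Set Implicit Arguments. Unset Strict Implicit.


Lemma coef_prod_lin (R : comRingType) n (v : 'I_n -> R) m :
 (\prod_(k < n) (1 + (v k)%:P * 'X))`_m = \sum_(A : {set 'I_n} | #|A| == m) \prod_(k in A) v k.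
Proof.
under eq_bigr do rewrite addrC.
rewrite (bigA_distr _ _ (fun k => (v k)%:P * 'X) (fun _ => 1)).
rewrite coef_sum [RHS]big_mkcond /=; apply: eq_bigr => A _.
rewrite -big_mkcond /= big_split /= -rmorph_prod prodr_const coefCM coefXn.
by rewrite eq_sym; case: eqP => _; rewrite ?mulr1 ?mulr0.
Qed.

Lemma perm_set (T : finType) (A B : {set T}) : #|A| = #|B| ->
  exists s : {perm T}, forall x, (s x \in A) = (x \in B).
Proof.
have base : forall A : {set T}, #|A| = #|B| -> #|A :\: B| = 0%N ->
  exists s : {perm T}, forall x, (s x \in A) = (x \in B).
  move=> A' HAB Hn; have: A' == B.
    by rewrite eqEcard -setD_eq0 -cards_eq0 Hn HAB leqnn.
  move/eqP => ->; exists 1%g => x; by rewrite perm1.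
move Hn: #|A :\: B| => n; move: Hn => /eq_leq.
elim: n A => [|n IH] A Hn HAB.
  by apply: base => //; apply/eqP; rewrite -leqn0.
case: (posnP #|A :\: B|) => [/(base _ HAB)//|Hpos].
have [i Hi]: exists i, i \in A :\: B.
  by by apply/set0Pn; rewrite -cards_eq0 -lt0n.
have [j Hj]: exists j, j \in B :\: A.
  by apply/set0Pn; rewrite -cards_eq0 cardsD -HAB setIC -cardsD -lt0n.
move: Hi Hj; rewrite !inE => /andP [iB iA] /andP [jA jB].
set A1 := [set x | tperm i j x \in A].
have cA1 : #|A1| = #|A|.
  rewrite -(card_preimset A (@perm_inj _ (tperm i j))).
  by apply: eq_card => x; rewrite !inE.
have : (#|A1 :\: B| < #|A :\: B|)%N.
  apply: proper_card; apply/properP; split.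
    apply/subsetP => x; rewrite !inE => /andP [xB].
    case: tpermP => [Ex|Ex|]; first by rewrite (negbTE jA).
      by rewrite Ex jB in xB.
    by move=> _ _ ->; rewrite xB.
  exists i; first by rewrite !inE iB iA.
  by rewrite !inE tpermL (negbTE jA) andbF.
move=> H1; have [s Hs] := IH A1 (leq_trans H1 Hn) (etrans cA1 HAB).
exists (s * tperm i j)%g => x; by rewrite permM -Hs inE.
Qed.



Lemma bitT (R : realFieldType) : bit R true = 1. Proof. by rewrite /bit. Qed.
Lemma bitF (R : realFieldType) : bit R false = 0. Proof. by rewrite /bit. Qed.

Lemma prod_u (R : realFieldType) N (y : state N) (a : R) : a != 0 ->
 \prod_(k < N) (1 + (1 - bit R (y k) / a)%:P * 'X) =
 (1 - ((1 - a) / a)%:P * 'X) ^+ hw y * (1 + 'X) ^+ (N - hw y).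
Proof.
move=> a0; rewrite (bigID (fun k => y k)) /=.
rewrite (eq_bigr (fun=> (1 - ((1 - a) / a)%:P * 'X))); last first.
  move=> k ->; rewrite bitT; congr (_ + _).
  by rewrite -(mulNr (((1 - a) / a)%:P)) -polyCN; congr (_%:P * _); field.
rewrite [X in _ * X](eq_bigr (fun=> (1 + 'X))); last first.
  by move=> k /negbTE ->; rewrite bitF mul0r subr0 mul1r.
have := prodr_const [pred k | y k] (1 - ((1 - a) / a)%:P * 'X : {poly R}).
rewrite /= => ->.
have := prodr_const [pred k | ~~ y k] (1 + 'X : {poly R}).
rewrite /= => ->.
congr (_ * _ ^+ _); rewrite /hw.
have := cardC [pred k | y k]; rewrite card_ord => HC.
apply/eqP; rewrite -(eqn_add2l #|[pred k | y k]|) subnKC; last first.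
  by rewrite -[X in (_ <= X)%N]HC leq_addr.
apply/eqP; rewrite -[RHS]HC; congr (_ + _).
Qed.

Lemma binR_neq0 (R : realFieldType) N n : (n <= N)%N -> ('C(N, n)%:R : R) != 0.
Proof. by move=> H; rewrite pnatr_eq0 -lt0n bin_gt0. Qed.

Lemma kraw_sum (R : realFieldType) N (y : state N) (a : R) n : a != 0 -> (n <= N)%N ->
  \sum_(A : {set 'I_N} | #|A| == n) \prod_(k in A) (1 - bit R (y k) / a) =
  'C(N, n)%:R * krawtchouk n (hw y) N a.
Proof.
move=> a0 nN.
by rewrite -coef_prod_lin prod_u // /krawtchouk [RHS]mulrC divfK ?binR_neq0.
Qed.

Definition st N (B : {set 'I_N}) : state N := [ffun k => k \in B].

Lemma hw_st N (B : {set 'I_N}) : hw (st B) = #|B|.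
Proof. by rewrite /hw; apply: eq_card => k; rewrite !inE ffunE. Qed.

Lemma sum_state (R : realFieldType) N (P : pred (state N)) (F : state N -> R) :
  \sum_(y | P y) F y = \sum_(B : {set 'I_N} | P (st B)) F (st B).
Proof.
rewrite (reindex (@st N)) //; exists (fun y : state N => [set k | y k]).
  by move=> B _; apply/setP => k; rewrite inE ffunE.
by move=> y _; apply/ffunP => k; rewrite ffunE inE.
Qed.

Lemma sum_const_card (R : realFieldType) N a (c : R) :
  \sum_(A : {set 'I_N} | #|A| == a) c = c *+ 'C(N, a).
Proof.
rewrite (eq_bigl (fun A => A \in [set A : {set 'I_N} | #|A| == a])).
  by rewrite sumr_const card_draws card_ord.
by move=> A; rewrite inE.
Qed.

Definition FF (R : realFieldType) N (a : R) (A B : {set 'I_N}) :=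
  \prod_(k in A) (1 - bit R (k \in B) / a).

Lemma FFE (R : realFieldType) N (a : R) (A B : {set 'I_N}) :
  FF a A B = \prod_k (if (k \in A) && (k \in B) then 1 - 1 / a else 1).
Proof.
rewrite /FF big_mkcond /=; apply: eq_bigr => k _.
by case: (k \in A); case: (k \in B); rewrite ?andbT ?andbF ?bitF ?bitT ?mul0r ?subr0.
Qed.

Lemma FFsym (R : realFieldType) N (a : R) (A B : {set 'I_N}) : FF a A B = FF a B A :> R.
Proof. by rewrite (FFE a A B) (FFE a B A); apply: eq_bigr => k _; rewrite andbC. Qed.

Lemma sumFF (R : realFieldType) N (a : R) (A : {set 'I_N}) n : a != 0 -> (n <= N)%N ->
  \sum_(B : {set 'I_N} | #|B| == n) FF a A B = 'C(N, n)%:R * krawtchouk n #|A| N a.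
Proof.
move=> a0 nN; rewrite -hw_st -kraw_sum //; apply: eq_bigr => B _.
by rewrite FFsym /FF; apply: eq_bigr => k _; rewrite ffunE.
Qed.

Lemma kraw_dual (R : realFieldType) N (a : R) m n : a != 0 -> (m <= N)%N -> (n <= N)%N ->
  krawtchouk m n N a = krawtchouk n m N a.
Proof.
move=> a0 mN nN.
have E : \sum_(A : {set 'I_N} | #|A| == n) \sum_(B : {set 'I_N} | #|B| == m) FF a A B =
         \sum_(B : {set 'I_N} | #|B| == m) \sum_(A : {set 'I_N} | #|A| == n) FF a B A.
  rewrite exchange_big; apply: eq_bigr => B _; apply: eq_bigr => A _; exact: FFsym.
have E1 : \sum_(A : {set 'I_N} | #|A| == n) \sum_(B : {set 'I_N} | #|B| == m) FF a A B =
   'C(N, n)%:R * ('C(N, m)%:R * krawtchouk m n N a).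
  rewrite mulrC mulr_natr -sum_const_card; apply: eq_bigr => A /eqP <-; exact: sumFF.
have E2 : \sum_(B : {set 'I_N} | #|B| == m) \sum_(A : {set 'I_N} | #|A| == n) FF a B A =
   'C(N, m)%:R * ('C(N, n)%:R * krawtchouk n m N a).
  rewrite mulrC mulr_natr -sum_const_card; apply: eq_bigr => B /eqP <-; exact: sumFF.
move: E; rewrite E1 E2 mulrCA => /(mulfI (binR_neq0 R mN)) /(mulfI (binR_neq0 R nN)) //.
Qed.



Lemma exch_expect (R : realFieldType) N (qt : state N -> R) (h : bool -> R) :
 (forall (s : 'S_N) (z : state N), qt [ffun k => z (s k)] = qt z) ->
 forall A B : {set 'I_N}, #|A| = #|B| ->
 expect qt (fun z => \prod_(k in A) h (z k)) = expect qt (fun z => \prod_(k in B) h (z k)).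
Proof.
move=> qinv A B /perm_set [s Hs].
symmetry; rewrite /expect (reindex (fun z : state N => [ffun k => z (s k)])) /=; last first.
  exists (fun z : state N => [ffun k => z (s^-1%g k)]) => z _;
    by apply/ffunP => k; rewrite !ffunE ?permK ?permKV.
apply: eq_bigr => z _; rewrite qinv; congr (_ * _).
rewrite [RHS](reindex_inj (@perm_inj _ s)) /=.
by apply: eq_big => [k|k _]; rewrite ?Hs ?ffunE.
Qed.

Lemma kappa_card (R : realFieldType) N (al : R) (qt : state N -> R) (A : {set 'I_N}) :
 al != 0 ->
 (forall (s : 'S_N) (z : state N), qt [ffun k => z (s k)] = qt z) ->
 kappa al qt A = kappat al qt #|A|.
Proof.
move=> a0 qinv; rewrite /kappa /kappat; congr (_ * _).
have kN : (#|A| <= N)%N by have := max_card A; rewrite card_ord.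
apply: (mulfI (binR_neq0 R kN)).
transitivity (\sum_(B : {set 'I_N} | #|B| == #|A|)
   expect qt (fun z => \prod_(k in B) (1 - bit R (z k) / al))).
  rewrite [LHS]mulr_natl -sum_const_card; apply: eq_bigr => B /eqP HB.
  exact: (exch_expect (fun b => 1 - bit R b / al) qinv (esym HB)).
rewrite /expect exchange_big mulr_sumr; apply: eq_bigr => z _.
by rewrite -mulr_sumr kraw_sum // mulrCA.
Qed.



Lemma part_card (R : realFieldType) N (G : {set 'I_N} -> R) :
  \sum_(A : {set 'I_N} | A != set0) G A =
  \sum_(1 <= k < N.+1) \sum_(A : {set 'I_N} | #|A| == k) G A.
Proof.
rewrite (eq_bigr (fun k => \sum_(A : {set 'I_N}) if #|A| == k then G A else 0));
  last by move=> k _; rewrite big_mkcond.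
rewrite exchange_big /= [LHS]big_mkcond; apply: eq_bigr => A _.
have kN : (#|A| <= N)%N by have := max_card A; rewrite card_ord.
case: (A =P set0) => [->|/eqP A0] /=.
  rewrite big1_seq // => k /andP [_]; rewrite mem_index_iota cards0.
  by case: k.
rewrite (bigD1_seq #|A|) ?iota_uniq ?mem_index_iota //=; last first.
  by rewrite ltnS kN andbT lt0n cards_eq0.
rewrite eqxx big1 ?addr0 // => k; rewrite eq_sym => /negbTE ->; done.
Qed.

Lemma step (R : realFieldType) N (phi gamma al : R) (qt : state N -> R) (x : state N) m :
  phi != 0 -> gamma != 0 -> al != 0 ->
  (forall (s : 'S_N) (z : state N), qt [ffun k => z (s k)] = qt z) ->
  \sum_(y | hw y == m) ptrans phi gamma al qt x y = plump phi gamma al qt (hw x) m.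
Proof.
move=> p0 g0 a0 qinv.
case: (leqP m N) => mN; last first.
  rewrite big_pred0; last first.
    move=> y; apply/negbTE; rewrite neq_ltn; apply/orP; left.
    by apply: (leq_ltn_trans _ mN); rewrite /hw; have := max_card [pred k | y k]; rewrite card_ord.
  by rewrite /plump bin_small // !mul0r.
rewrite (sum_state (fun y => hw y == m)).
transitivity (\sum_(B : {set 'I_N} | #|B| == m) phi ^+ m * (1 - phi) ^+ (N - m) *
   (1 + \sum_(A : {set 'I_N} | A != set0) kappa al qt A *
        (FF phi A B * \prod_(k in A) (1 - bit R (x k) / gamma)))).
  apply: eq_big => [B|B /eqP HB]; first by rewrite hw_st.
  rewrite /ptrans HB; congr (_ * (1 + _)); apply: eq_bigr => A _.
  by rewrite big_split /= /FF; congr (_ * (_ * _)); apply: eq_bigr => k _; rewrite ffunE.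
rewrite -mulr_sumr big_split /= sum_const_card.
rewrite exchange_big /=.
rewrite (eq_bigr (fun A => kappa al qt A * \prod_(k in A) (1 - bit R (x k) / gamma) *
    ('C(N, m)%:R * krawtchouk m #|A| N phi))); last first.
  by move=> A _; rewrite -sumFF // mulr_sumr; apply: eq_bigr => B _; ring.
rewrite part_card.
have E : forall k, (1 <= k < N.+1)%N ->
  \sum_(A : {set 'I_N} | #|A| == k) kappa al qt A * \prod_(k in A) (1 - bit R (x k) / gamma) *
    ('C(N, m)%:R * krawtchouk m #|A| N phi) =
  'C(N, m)%:R * ('C(N, k)%:R * kappat al qt k * krawtchouk k m N phi * krawtchouk k (hw x) N gamma).
  move=> k /andP [k1 kN]; rewrite ltnS in kN.
  rewrite (eq_bigr (fun A : {set 'I_N} => kappat al qt k * krawtchouk m k N phi * 'C(N, m)%:R *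
       \prod_(j in A) (1 - bit R (x j) / gamma))); last first.
    by move=> A /eqP HA; rewrite kappa_card // HA; ring.
  rewrite -mulr_sumr kraw_sum // (kraw_dual p0 mN kN); ring.
rewrite (eq_big_nat _ _ E) -mulr_sumr /plump; ring.
Qed.



Section Path.
Variable S : finType.

Definition ext T (ys : {ffun 'I_T.+1 -> S}) (y : S) : {ffun 'I_T.+2 -> S} :=
  [ffun i : 'I_T.+2 => if (i < T.+1)%N then ys (inord i) else y].

Lemma ext_lt T ys y i : (i < T.+1)%N -> @ext T ys y (inord i) = ys (inord i).
Proof. by move=> H; rewrite ffunE inordK ?H // (leq_trans H). Qed.

Lemma ext_last T ys y : @ext T ys y (inord T.+1) = y.
Proof. by rewrite ffunE inordK // ltnn. Qed.

Lemma ext_bij T : bijective (fun p : {ffun 'I_T.+1 -> S} * S => ext p.1 p.2).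
Proof.
exists (fun xs : {ffun 'I_T.+2 -> S} => ([ffun j : 'I_T.+1 => xs (inord j)], xs ord_max)).
  move=> [ys y] /=; congr (_, _).
    apply/ffunP => j; rewrite ffunE ext_lt // inord_val //.
  rewrite ffunE /= ltnn //.
move=> xs; apply/ffunP => i; rewrite ffunE /=.
case: ltnP => H.
  by rewrite ffunE inordK // inord_val.
have -> : i = ord_max by apply/val_inj => /=; apply/eqP; rewrite eqn_leq H -ltnS ltn_ord.
done.
Qed.
End Path.

Lemma path_ind (R : realFieldType) N (mu : state N -> R)
  (p : nat -> state N -> state N -> R) (L : nat -> nat -> nat -> R) :
 (forall t x m, \sum_(y | hw y == m) p t x y = L t (hw x) m) ->
 forall T ms, path_hw_prob mu p T ms =
   (\sum_(x | hw x == ms 0%N) mu x) * \prod_(i < T) L i.+1 (ms i) (ms i.+1).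
Proof.
move=> Hs; elim=> [|T IH] ms.
  rewrite big_ord0 mulr1 /path_hw_prob.
  rewrite (reindex (fun x : state N => [ffun _ : 'I_1 => x])); last first.
    exists (fun xs : {ffun 'I_1 -> state N} => xs ord0) => [x _|xs _]; first by rewrite ffunE.
    by apply/ffunP => i; rewrite ffunE (ord1 i).
  apply: eq_big => [x|x _]; last by rewrite ffunE big_ord0 mulr1.
  apply/forallP/idP => [/(_ ord0)|H i]; rewrite ffunE //; by rewrite (ord1 i).
rewrite /path_hw_prob (reindex _ (onW_bij _ (ext_bij _ T))) /=.
transitivity (\sum_(ys : {ffun 'I_T.+1 -> state N} | [forall i, hw (ys i) == ms i])
   \sum_(y | hw y == ms T.+1)
   (mu (ys ord0) * \prod_(i < T) p i.+1 (ys (inord i)) (ys (inord i.+1))) * p T.+1 (ys (inord T)) y).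
  rewrite pair_big /=; apply: eq_big => [[ys y]|[ys y] _] /=.
    apply/forallP/andP => [H|[/forallP H1 /eqP H2] i].
      split.
        apply/forallP => j; have := H (inord j).
        by rewrite ext_lt // inordK ?(leq_trans (ltn_ord j)) // inord_val.
      by have := H (inord T.+1); rewrite ext_last inordK.
    case: (ltnP i T.+1) => Hi.
      rewrite -(inord_val i) ext_lt // inordK ?ltn_ord //.
      by have := H1 (inord i); rewrite inordK.
    have -> : i = inord T.+1.
      by apply/val_inj; rewrite /= inordK //; apply/eqP; rewrite eqn_leq Hi -ltnS ltn_ord.
    by rewrite ext_last inordK // H2.
  rewrite big_ord_recr /= mulrA; congr (_ * _ * _).
  - rewrite ffunE /=; congr (mu (ys _)); exact/val_inj/inordK.
  - apply: eq_bigr => i _.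
    by rewrite (@ext_lt _ T ys y i (ltnW (ltn_ord i))) (@ext_lt _ T ys y i.+1 (ltn_ord i)).
  - by rewrite ext_lt // ext_last.
rewrite (eq_bigr (fun ys : {ffun 'I_T.+1 -> state N} => (mu (ys ord0) * \prod_(i < T) p i.+1 (ys (inord i)) (ys (inord i.+1)))
      * L T.+1 (ms T) (ms T.+1))); last first.
  move=> ys /forallP H; rewrite -mulr_sumr Hs; congr (_ * L _ _ _).
  by have := H (inord T); rewrite inordK // => /eqP.
by rewrite -mulr_suml -/(path_hw_prob mu p T ms) IH big_ord_recr /= mulrA.
Qed.


Unset Implicit Arguments.

Theorem proposition8 (R : realFieldType) (N : nat) (phi gamma : R)
  (q : nat -> state N -> R) (mu : state N -> R) :
  (1 <= N)%N ->
  0 < phi < 1 -> 0 < gamma < 1 -> 1 <= phi + gamma ->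
  (* Z_t has law q t: a probability distribution with exchangeable coordinates *)
  (forall t z, 0 <= q t z) ->
  (forall t, \sum_(z : state N) q t z = 1) ->
  (forall t (s : 'S_N) (z : state N), q t [ffun k => z (s k)] = q t z) ->
  (* the given one-step kernels are (nonnegative) transition probabilities *)
  (forall t x y, 0 <= ptrans phi gamma (Num.min phi gamma) (q t) x y) ->
  (* initial law of X_0 *)
  (forall x, 0 <= mu x) -> \sum_(x : state N) mu x = 1 ->
  (* conclusion: (||X_t||)_t is Markov with the lumped transitions *)
  forall (T : nat) (ms : nat -> nat),
    path_hw_prob mu (fun t => ptrans phi gamma (Num.min phi gamma) (q t)) T ms =
    (\sum_(x : state N | hw x == ms 0%N) mu x) *
    \prod_(i < T) plump phi gamma (Num.min phi gamma) (q i.+1) (ms i) (ms i.+1).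
Proof.
move=> _ /andP [p0 _] /andP [g0 _] _ _ _ qinv _ _ _ T ms.
have a0 : 0 < Num.min phi gamma by rewrite lt_min p0 g0.
have Hs : forall t x m, \sum_(y | hw y == m) ptrans phi gamma (Num.min phi gamma) (q t) x y
   = plump phi gamma (Num.min phi gamma) (q t) (hw x) m.
  move=> t x m; apply: step; [exact: lt0r_neq0 | exact: lt0r_neq0 | exact: lt0r_neq0 | exact: qinv].
exact: (@path_ind R N mu (fun t => ptrans phi gamma (Num.min phi gamma) (q t))
   (fun t => plump phi gamma (Num.min phi gamma) (q t)) Hs T ms).
Qed.
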